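(* Fix range parameters $0<L_I\le U_I$ and $0\le L_V\le U_V$, and let $\alpha=(a_1,\dots,a_w)$. Let $a_i,a_j\in\mathbb{L}^{t+1}_\alpha$ with $a_i$ to the left of $a_j$. Suppose both have leftmost partially-proper items, $a_{i'}$ and $a_{j'}$ respectively, in $\mathbb{L}^t_\alpha$. Then $a_{i'}$ equals $a_{j'}$ or is to the left of $a_{j'}$.
   Context: Let $\alpha=(a_1,\dots,a_w)$ be a finite sequence of real numbers, with items identified by their positions. Increasing subsequences are non-strict. $a_j$ is compatible with $a_i$ if $j<i$ and $a_j\le a_i$. $RL_\alpha(a)$ is the maximum length of an increasing subsequence ending at $a$. $a_j$ is a predecessor of $a_i$ if it is compatible with $a_i$ and $RL_\alpha(a_j)=RL_\alpha(a_i)-1$. The horizontal list $\mathbb{L}^t_\alpha$ is the list of items of rising length $t$, ordered by position; ''left of'' means earlier position. Items are colored black or non-black recursively by level: all items of $\mathbb{L}^1_\alpha$ are non-black, and an item of $\mathbb{L}^{t+1}_\alpha$ is non-black iff it has a range-proper predecessor. Here a range-proper predecessor of $a_i$ is a non-black predecessor $a_k$ with $L_V\le a_i-a_k\le U_V$ and $L_I\le i-k\le U_I$. For $a_i\in\mathbb{L}^{t+1}_\alpha$, its leftmost partially-proper item is the leftmost non-black item $a_k\in\mathbb{L}^t_\alpha$ with $L_V\le a_i-a_k$ and $i-k\le U_I$, if one exists. *)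

(* Defs.v *)
From HB Require Import structures.
From mathcomp Require Import all_boot all_order all_algebra.
Set Implicit Arguments. Unset Strict Implicit. Unset Printing Implicit Defensive.
Import Order.TTheory GRing.Theory Num.Theory.
Local Open Scope ring_scope.

Section Levels.
Variable R : realFieldType.
(* the sequence alpha = (a_1,...,a_w); items are identified by their
   positions, here 0-based ordinals of 'I_w (differences are unaffected). *)
Variable s : seq R.
Local Notation w := (size s).
Definition itm (i : 'I_w) : R := nth 0 s i.

Definition inc_set (S : {set 'I_w}) : bool :=
  [forall j in S, forall k in S, (j < k)%N ==> (itm j <= itm k)].

Definition RL (i : 'I_w) : nat :=
  \max_(S : {set 'I_w} | [&& i \in S, [forall j in S, (j <= i)%N] & inc_set S])
     #|S|.

Definition compatible (j i : 'I_w) : bool := (j < i)%N && (itm j <= itm i).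

Definition predecessor (j i : 'I_w) : bool :=
  compatible j i && (RL j == (RL i).-1)%N.

Definition inL (t : nat) (i : 'I_w) : bool := RL i == t.

Variables (L_I U_I : nat) (L_V U_V : R).

Definition in_range (k i : 'I_w) : bool :=
  [&& L_V <= itm i - itm k, itm i - itm k <= U_V &
      (L_I <= i - k <= U_I)%N].

(* NB t i  <=>  a_i is in L^t and is non-black (coloring defined by level) *)
Fixpoint NB (t : nat) (i : 'I_w) : bool :=
  match t with
  | 0 => false
  | t'.+1 => inL t'.+1 i &&
      (match t' with
       | 0 => true
       | _ => [exists k : 'I_w, [&& predecessor k i, NB t' k & in_range k i]]
       end)
  end.

Definition nonblack (i : 'I_w) : bool := NB (RL i) i.

Definition partially_proper (t : nat) (i k : 'I_w) : bool :=
  [&& NB t k, L_V <= itm i - itm k & (i%:Z - k%:Z <= U_I%:Z)%R].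

Definition leftmost_pp (t : nat) (i k : 'I_w) : bool :=
  partially_proper t i k &&
  [forall k' : 'I_w, partially_proper t i k' ==> (k <= k')%N].

End Levels.

(* Main.v *)
Require Import Defs.
From HB Require Import structures.
From mathcomp Require Import all_boot all_order all_algebra.
Import Order.TTheory GRing.Theory Num.Theory.
Local Open Scope ring_scope.

Lemma RL_lt (R : realFieldType) (s : seq R) (i j : 'I_(size s)) :
  (i < j)%N -> itm i <= itm j -> (RL i < RL j)%N.
Proof.
move=> hij hv.
set P := (fun (i : 'I_(size s)) (S : {set 'I_(size s)}) =>
  [&& i \in S, [forall j in S, (j <= i)%N] & inc_set S]).
have hA : (0 < #|[pred S | P i S]|)%N.
  apply/card_gt0P; exists [set i]; rewrite inE /P set11 /=.
  apply/andP; split.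
    by apply/forall_inP => k; rewrite inE => /eqP ->.
  apply/forall_inP => a; rewrite inE => /eqP ->.
  by apply/forall_inP => b; rewrite inE => /eqP ->; rewrite ltnn.
have [S0 HS0 Hm] := eq_bigmax_cond (fun S : {set 'I_(size s)} => #|S|) hA.
rewrite inE /P in HS0.
case/and3P: HS0 => iS leS incS.
have -> : RL i = #|S0| by rewrite /RL; exact: Hm.
have jS : j \notin S0.
  apply/negP => /(forall_inP leS) /=; by rewrite leqNgt hij.
have le1 : forall k, k \in S0 -> itm k <= itm i.
  move=> k kS; have := forall_inP leS k kS; rewrite leq_eqVlt => /orP [/eqP|] h.
    by have -> : k = i by apply: val_inj.
  by have := forall_inP (forall_inP incS k kS) i iS; rewrite h.
have: (#|j |: S0| <= RL j)%N.
  rewrite /RL; apply: (@leq_bigmax_cond _ _ (fun S : {set 'I_(size s)} => #|S|)).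
  apply/and3P; split; first by rewrite setU11.
    apply/forall_inP => k; rewrite in_setU1 => /orP [/eqP ->//|kS].
    exact: leq_trans (forall_inP leS k kS) (ltnW hij).
  apply/forall_inP => a; rewrite in_setU1 => /orP [/eqP ->|aS];
  apply/forall_inP => b; rewrite in_setU1 => /orP [/eqP ->|bS].
  - by rewrite ltnn.
  - apply/implyP => hjb; have := forall_inP leS b bS => hb.
    by have := leq_trans hjb (leq_trans hb (ltnW hij)); rewrite ltnn.
  - by apply/implyP => _; exact: le_trans (le1 a aS) hv.
  - exact: forall_inP (forall_inP incS a aS) b bS.
by rewrite cardsU1 jS.
Qed.

Theorem mainTheorem14 (R : realFieldType) (s : seq R)
  (L_I U_I : nat) (L_V U_V : R)
  (hLI : (0 < L_I)%N) (hIU : (L_I <= U_I)%N)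
  (hLV : 0 <= L_V) (hVU : L_V <= U_V)
  (t : nat) (i j i' j' : 'I_(size s))
  (hi : inL t.+1 i) (hj : inL t.+1 j) (hij : (i < j)%N)
  (hi' : leftmost_pp L_I U_I L_V U_V t i i')
  (hj' : leftmost_pp L_I U_I L_V U_V t j j') :
  (i' <= j')%N.
Proof.
have hv : itm j < itm i.
  rewrite ltNge; apply/negP => h.
  have := @RL_lt R s i j hij h; move: hi hj; rewrite /inL => /eqP -> /eqP ->.
  by rewrite ltnn.
case/andP: hi' => _ /forallP /(_ j') /implyP; apply.
case/andP: hj' => /and3P [nb hL hU] _.
apply/and3P; split => //.
  apply: le_trans hL _; rewrite lerD2r; exact: ltW.
apply: le_trans hU; rewrite lerD2r lez_nat; exact: ltnW.
Qed.
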